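(* Let $g,h,K$ be complex numbers with $K\neq\tfrac12$, and set $K'=K(2K-1)^{-1}$. For any complex $L$ let $$\hat R(L;g,h)=\begin{pmatrix}1&-hL&hL&ghL\\0&1-L&L&gL\\0&L&1-L&-gL\\0&0&0&1\end{pmatrix},\qquad R(L;g,h)=P\hat R(L;g,h).$$ Then $R(K';g,h)$ is invertible and $$P\,R(K;g,h)\,P=\big(R(K';g,h)\big)^{-1}.$$
   Context: Matrices are written in the ordered basis $e_1\otimes e_1,e_1\otimes e_2,e_2\otimes e_1,e_2\otimes e_2$ of $\mathbb{C}^2\otimes\mathbb{C}^2$; $P$ is the flip matrix, i.e. the $4\times4$ permutation matrix swapping the second and third basis vectors. The matrix $PRP$ is what the paper denotes $(21)R$. *)

(* Defs.v *)
From HB Require Import structures.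
From mathcomp Require Import all_boot all_order all_algebra.
From mathcomp Require Import complex.
From mathcomp Require Import reals.
Set Implicit Arguments. Unset Strict Implicit. Unset Printing Implicit Defensive.
Import GRing.Theory Num.Theory.
Local Open Scope ring_scope.
Local Open Scope complex_scope.

(* Basis order: e1(x)e1, e1(x)e2, e2(x)e1, e2(x)e2  ~ indices 0,1,2,3. *)

Definition flipP {F : nzRingType} : 'M[F]_4 :=
  \matrix_(i < 4, j < 4)
   nth 0 (nth [::] [:: [:: 1; 0; 0; 0];
                       [:: 0; 0; 1; 0];
                       [:: 0; 1; 0; 0];
                       [:: 0; 0; 0; 1]] i) j.

Definition Rhat {F : comNzRingType} (L g h : F) : 'M[F]_4 :=
  \matrix_(i < 4, j < 4)
   nth 0 (nth [::] [:: [:: 1; - h * L; h * L; g * h * L];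
                       [:: 0; 1 - L; L; g * L];
                       [:: 0; L; 1 - L; - g * L];
                       [:: 0; 0; 0; 1]] i) j.

Definition Rmat {F : comNzRingType} (L g h : F) : 'M[F]_4 := flipP *m Rhat L g h.

(* Main.v *)
Require Import Defs.
From HB Require Import structures.
From mathcomp Require Import all_boot all_order all_algebra.
From mathcomp Require Import complex reals.
From mathcomp Require Import ring.
Import GRing.Theory Num.Theory.
Local Open Scope ring_scope.
Local Open Scope complex_scope.

Lemma flipPP (R : realType) : (flipP : 'M[R[i]]_4) *m flipP = 1%:M.
Proof.
apply/matrixP => i j; rewrite !mxE !big_ord_recr big_ord0 /= !mxE.
case: i => [[|[|[|[|i]]]] Hi] //; case: j => [[|[|[|[|j]]]] Hj] //=;
  rewrite ?mxE /=; ring.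
Qed.

Lemma RhatInv (R : realType) (g h K : R[i]) : K != 2^-1 ->
  Rhat K g h *m Rhat (K / (2 * K - 1)) g h = 1%:M.
Proof.
move=> HK.
have hc : 2 * K - 1 != 0.
  apply: contra HK; rewrite subr_eq0 => /eqP H.
  have h2 : (2 : R[i]) != 0 by rewrite pnatr_eq0.
  by apply/eqP; apply: (mulfI h2); rewrite H mulfV.
apply/matrixP => i j; rewrite !mxE !big_ord_recr big_ord0 /= !mxE.
case: i => [[|[|[|[|i]]]] Hi] //; case: j => [[|[|[|[|j]]]] Hj] //=;
  rewrite ?mxE /=; field; rewrite ?hc //.
Qed.

Theorem mainTheorem10 (R : realType) (g h K : R[i]) :
  K != 2^-1 ->
  let K' := K / (2 * K - 1) in
  Rmat K' g h \in unitmx /\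
  flipP *m Rmat K g h *m flipP = invmx (Rmat K' g h).
Proof.
move=> HK K'.
have E : (Rhat K g h *m flipP) *m Rmat K' g h = 1%:M.
  by rewrite /Rmat mulmxA -(mulmxA (Rhat K g h) flipP flipP) flipPP mulmx1 RhatInv.
have U : Rmat K' g h \in unitmx.
  by case/mulmx1_unit: E.
split => //.
have -> : flipP *m Rmat K g h *m flipP = Rhat K g h *m flipP.
  by rewrite /Rmat mulmxA flipPP mul1mx.
have := mulmxK U (Rhat K g h *m flipP).
by rewrite E mul1mx => ->.
Qed.
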